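(* If all the nodes in the graph are given different identities, then the identity of the leader node will be uniquely defined by the high level algorithm.
   Context: A broadcast network is modeled as a connected graph G(V,E) with n nodes, reliable FIFO message delivery with arbitrary finite delays, no failures. The high level (fragment-level) leader election algorithm: nodes are partitioned into fragments each with a candidate; id(F) = (size, candidate identity) ordered lexicographically (by size, then identity); external edges are directed from the larger-id fragment to the smaller-id one. Initially every node is a size-1 fragment in state wait. A fragment with some outgoing edge waits; a fragment whose external edges are all incoming enters work, counts its size new_size after a finite positive delay, and compares with its maximal neighbor F': if new_size > X · size(F') (X > 1) it updates its size, all its external edges become outgoing, and it returns to wait; otherwise it joins F'. A fragment with no external edges is the leader. It has been shown that, with distinct node identities, the sequence of events of this algorithm does not depend on the state delays (waitdelay, workdelay). *)

(* Defs.v *)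
From Stdlib Require Import Relations.
From mathcomp Require Import all_boot all_order all_algebra.
Set Implicit Arguments. Unset Strict Implicit. Unset Printing Implicit Defensive.
Import Order.TTheory GRing.Theory Num.Theory.

(* A configuration is a pair (cand, sz):
   - cand v = the candidate node of the fragment containing v;
     the fragment of candidate c is [set v | cand v == c];
   - sz c  = the recorded size size(F) of the fragment whose candidate is c. *)

Local Open Scope ring_scope.

Section HighLevel.
Variables (V : finType) (e : rel V) (idn : V -> nat).
Variables (R : realFieldType) (X : R).

Definition config := ({ffun V -> V} * {ffun V -> nat})%type.

Definition init_config : config := ([ffun v => v], [ffun _ => 1%N]).

Definition is_cand (s : config) (c : V) : bool := s.1 c == c.

Definition fragment (s : config) (c : V) : {set V} := [set v | s.1 v == c].

(* id(F) = (size, candidate identity), ordered lexicographically: id_lt s c d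
   means id(fragment c) < id(fragment d) *)
Definition id_lt (s : config) (c d : V) : bool :=
  (s.2 c < s.2 d)%N || ((s.2 c == s.2 d) && (idn c < idn d)%N).

Definition neighbor (s : config) (c d : V) : Prop :=
  is_cand s c /\ is_cand s d /\ c <> d /\
  exists u v, e u v /\ s.1 u = c /\ s.1 v = d.

(* all external edges of fragment c are incoming: c has at least one neighbor
   and every neighbor has a larger id (edges go from larger to smaller id) *)
Definition all_incoming (s : config) (c : V) : Prop :=
  is_cand s c /\ (exists d, neighbor s c d) /\
  forall d, neighbor s c d -> id_lt s c d.

Definition max_neighbor (s : config) (c d : V) : Prop :=
  neighbor s c d /\ forall d', neighbor s c d' -> d' = d \/ id_lt s d' d.

(* one work phase of fragment c (the event of the algorithm) *)
Definition step (s s' : config) : Prop :=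
  exists c d, all_incoming s c /\ max_neighbor s c d /\
   let new_size := #|fragment s c| in
   ( ((new_size%:R : R) > X * (s.2 d)%:R /\
        s' = (s.1, [ffun v => if v == c then new_size else s.2 v]))
   \/ (~ ((new_size%:R : R) > X * (s.2 d)%:R) /\
        s' = ([ffun v => if s.1 v == c then d else s.1 v], s.2)) ).

(* configurations reachable from the initial one under arbitrary delays
   (any interleaving of work events) *)
Definition reachable (s : config) : Prop :=
  clos_refl_trans config step init_config s.

Definition leader (s : config) (c : V) : Prop :=
  is_cand s c /\ forall d, ~ neighbor s c d.

End HighLevel.

(* Main.v *)
Require Import Defs.
From Stdlib Require Import Relations.
From mathcomp Require Import all_boot all_order all_algebra.
Import Order.TTheory GRing.Theory Num.Theory.
From mathcomp Require Import zify.
Set Implicit Arguments. Unset Strict Implicit.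

Lemma strip (A : Type) (r : relation A)
  (diam : forall s a b, r s a -> r s b -> a = b \/ exists t, r a t /\ r b t) s a b :
  r s a -> clos_refl_trans A r s b ->
  exists t, clos_refl_trans A r a t /\ clos_refl_trans A r b t.
Proof.
move=> hsa /clos_rt_rt1n_iff hsb.
elim: hsb a hsa => [x|x y z hxy hyz IH] a hxa.
  by exists a; split; [apply: rt_refl | apply: rt_step].
case: (diam _ _ _ hxa hxy) => [->|[t0 [h1 h2]]].
  by exists z; split; [apply/clos_rt_rt1n_iff | apply: rt_refl].
have [t [ht1 ht2]] := IH _ h2.
by exists t; split => //; apply: rt_trans (rt_step _ _ _ _ h1) ht1.
Qed.

Lemma confl (A : Type) (r : relation A)
  (diam : forall s a b, r s a -> r s b -> a = b \/ exists t, r a t /\ r b t) s a b :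
  clos_refl_trans A r s a -> clos_refl_trans A r s b ->
  exists t, clos_refl_trans A r a t /\ clos_refl_trans A r b t.
Proof.
move=> /clos_rt_rt1n_iff hsa.
elim: hsa b => [x|x y z hxy hyz IH] b hxb.
  by exists b; split => //; apply: rt_refl.
have [t1 [h1 h2]] := strip diam hxy hxb.
have [t [ht1 ht2]] := IH _ h1.
by exists t; split => //; apply: rt_trans h2 ht2.
Qed.

Lemma terminal_rt (A : Type) (r : relation A) s t :
  (forall u, ~ r s u) -> clos_refl_trans A r s t -> t = s.
Proof.
move=> hs /clos_rt_rt1n_iff h; inversion h as [|x y hxy]; subst; first by [].
by case: (hs _ hxy).
Qed.

Local Open Scope ring_scope.

Definition cond (V : finType) (R : realFieldType) (X : R) (s : config V) c d : bool :=
  X * (s.2 d)%:R < (#|fragment s c|)%:R.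
Definition grow (V : finType) (s : config V) c : config V :=
  (s.1, [ffun v => if v == c then #|fragment s c| else s.2 v]).
Definition mrg (V : finType) (s : config V) c d : config V :=
  ([ffun v => if s.1 v == c then d else s.1 v], s.2).
Definition res (V : finType) (R : realFieldType) (X : R) (s : config V) c d :=
  if cond X s c d then grow s c else mrg s c d.

Lemma stepE (V : finType) e idn (R : realFieldType) (X : R) (s s' : config V) :
  step e idn X s s' <-> exists c d, all_incoming e idn s c /\
     max_neighbor e idn s c d /\ s' = res X s c d.
Proof.
split; move=> [c [d [h1 [h2 h3]]]]; exists c, d; do 2!split => //.
  rewrite /res /cond; case: h3 => [[hc ->]|[hc ->]]; first by rewrite hc.
  by move/negbTE: (introN idP hc) => ->.
move: h3; rewrite /res /cond; case: ifP => hc ->; [left|right]; split => //.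
Qed.

Lemma id_lt_asym (V : finType) idn (s : config V) c d :
  id_lt idn s c d -> id_lt idn s d c -> False.
Proof.
rewrite /id_lt => /orP[h|/andP[/eqP h1 h2]] /orP[h'|/andP[/eqP h1' h2']]; lia.
Qed.

Lemma neighbor_sym (V : finType) (e : rel V) (esym : symmetric e) s c d :
  neighbor e s c d -> neighbor e s d c.
Proof.
case=> [hc [hd [ne [u [v [huv [hu hv]]]]]]]; do 3!split => //.
  by move=> h; apply: ne.
by exists v, u; rewrite esym.
Qed.

Lemma max_uniq (V : finType) e idn (s : config V) c d d' :
  max_neighbor e idn s c d -> max_neighbor e idn s c d' -> d = d'.
Proof.
move=> [n1 m1] [n2 m2].
case: (m1 _ n2) => [->//|h1]; case: (m2 _ n1) => [->//|h2].
by case: (id_lt_asym h1 h2).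
Qed.

Lemma not_adj (V : finType) (e : rel V) (esym : symmetric e) idn s c c' :
  all_incoming e idn s c -> all_incoming e idn s c' -> ~ neighbor e s c' c.
Proof.
move=> [_ [_ h]] [_ [_ h']] n.
exact: id_lt_asym (h' _ n) (h _ (neighbor_sym esym n)).
Qed.

Lemma transfer (V : finType) e idn (R : realFieldType) (X : R) (s s' : config V) c' d' :
  is_cand s' c' ->
  (forall x, neighbor e s' c' x <-> neighbor e s c' x) ->
  (forall x, neighbor e s c' x -> s'.2 x = s.2 x) ->
  s'.2 c' = s.2 c' ->
  fragment s' c' = fragment s c' ->
  all_incoming e idn s c' -> max_neighbor e idn s c' d' ->
  [/\ all_incoming e idn s' c', max_neighbor e idn s' c' d' & cond X s' c' d' = cond X s c' d'].
Proof.
move=> hc hn hz hzc hf [_ [[x hx] hi]] [hd hm].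
have idE y z : neighbor e s c' y -> neighbor e s c' z -> id_lt idn s' y z = id_lt idn s y z.
  by move=> hy hz'; rewrite /id_lt (hz y) // (hz z).
have idE' y : neighbor e s c' y -> id_lt idn s' c' y = id_lt idn s c' y.
  by move=> hy; rewrite /id_lt hzc (hz y).
split.
- split => //; split; first by exists x; apply/hn.
  by move=> y /hn hy; rewrite idE' //; apply: hi.
- split; first by apply/hn.
  move=> y /hn hy; case: (hm _ hy) => [->|h]; [by left | right].
  by rewrite idE.
- by rewrite /cond hf hz.
Qed.

Lemma pres_grow (V : finType) e (s : config V) c c' :
  c' <> c -> ~ neighbor e s c' c ->
  [/\ is_cand (grow s c) c' = is_cand s c',
  (forall x, neighbor e (grow s c) c' x <-> neighbor e s c' x),
  (forall x, neighbor e s c' x -> (grow s c).2 x = s.2 x),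
  (grow s c).2 c' = s.2 c' &
  fragment (grow s c) c' = fragment s c'].
Proof.
move=> hcc hn; split => //.
- by move=> x /=; rewrite ffunE; case: eqP => // ->.
- by rewrite /= ffunE; case: eqP.
Qed.

Lemma pres_mrg (V : finType) e (s : config V) c c' d :
  c' <> c -> ~ neighbor e s c' c -> neighbor e s c d -> d <> c' -> is_cand s c' ->
  [/\ is_cand (mrg s c d) c',
  (forall x, neighbor e (mrg s c d) c' x <-> neighbor e s c' x),
  (forall x, neighbor e s c' x -> (mrg s c d).2 x = s.2 x),
  (mrg s c d).2 c' = s.2 c' &
  fragment (mrg s c d) c' = fragment s c'].
Proof.
move=> hcc hn [hc [hd [hdc _]]] hdc' hc'.
have f'E v : (mrg s c d).1 v = if s.1 v == c then d else s.1 v by rewrite /= ffunE.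
have uE u : ((mrg s c d).1 u == c') = (s.1 u == c').
  rewrite f'E; case: (s.1 u =P c) => [->|//].
  by rewrite (introF eqP hdc') (introF eqP (fun h => hcc (esym h))).
have hcm : is_cand (mrg s c d) c'.
  by rewrite /is_cand f'E; move/eqP: hc' => ->; rewrite (introF eqP hcc).
split => //.
- move=> x; split.
  + move=> [hc'' [hx [ne [u [v [huv [hu hv]]]]]]].
    have hu' : s.1 u = c' by apply/eqP; rewrite -uE hu.
    move: hv; rewrite f'E; case: eqP => [hvc hdx|_ hv].
      by case: hn; do 3!split => //; exists u, v.
    have hxs : is_cand s x.
      move: hx; rewrite /is_cand f'E; case: (s.1 x =P c) => [hxc /eqP hxd|_ //].
      by move: hd; rewrite /is_cand hxd hxc => /eqP hcx; case: hdc; rewrite hcx hxd.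

    by do 3!split => //; exists u, v.
  + move=> [hc'' [hx [ne [u [v [huv [hu hv]]]]]]].
    have hxc : x <> c by move=> hx'; apply: hn; subst x; do 3!split => //; exists u, v.
    split => //; split.
      by rewrite /is_cand f'E; move/eqP: hx => ->; rewrite (introF eqP hxc).
    split => //.
    exists u, v; split => //; split; first by apply/eqP; rewrite uE hu.
    by rewrite f'E hv (introF eqP hxc).
- by apply/setP => v; rewrite !inE uE.
Qed.

Lemma fragE (V : finType) (s : config V) (z : {ffun V -> nat}) x :
  fragment (s.1, z) x = fragment s x.
Proof. by []. Qed.

Lemma comm_gg (V : finType) (s : config V) c c' :
  c <> c' -> grow (grow s c) c' = grow (grow s c') c.
Proof.
move=> hcc; rewrite /grow !fragE; congr (_, _); apply/ffunP => v; rewrite !ffunE.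
by case: (v =P c) => [->|]; rewrite ?(introF eqP hcc) //; case: (v =P c').
Qed.

Lemma frag_mrg (V : finType) (s : config V) c' d' c :
  c <> c' -> d' <> c -> fragment (mrg s c' d') c = fragment s c.
Proof.
move=> h1 h2; apply/setP => v; rewrite !inE /= ffunE.
case: (s.1 v =P c') => [->|//].
by rewrite (introF eqP h2) (introF eqP (fun h => h1 (esym h))).
Qed.

Lemma comm_gm (V : finType) (s : config V) c c' d' :
  c <> c' -> d' <> c -> mrg (grow s c) c' d' = grow (mrg s c' d') c.
Proof.
by move=> h1 h2; rewrite /grow /mrg /= -/(mrg s c' d') frag_mrg.
Qed.

Lemma comm_mm (V : finType) (s : config V) c d c' d' :
  c <> c' -> d <> c' -> d' <> c ->
  mrg (mrg s c d) c' d' = mrg (mrg s c' d') c d.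
Proof.
move=> h1 h2 h3; rewrite /mrg /=; congr (_, _); apply/ffunP => v; rewrite !ffunE.
move: (s.1 v) => w.
have [hc|hc] := eqVneq w c.
  by rewrite hc ?eqxx (introF eqP h2) (introF eqP h1) ?eqxx.
have [hc'|hc'] := eqVneq w c'.
  by rewrite (introF eqP h3).
by rewrite (negbTE hc).
Qed.

Lemma resE (V : finType) (R : realFieldType) (X : R) (s : config V) c d :
  res X s c d = if cond X s c d then grow s c else mrg s c d.
Proof. by []. Qed.

Lemma pres_res (V : finType) (e : rel V) (esy : symmetric e) idn (R : realFieldType) (X : R)
   (s : config V) c d c' d' :
  c' <> c -> all_incoming e idn s c -> max_neighbor e idn s c d ->
  all_incoming e idn s c' -> max_neighbor e idn s c' d' ->
  [/\ all_incoming e idn (res X s c d) c', max_neighbor e idn (res X s c d) c' d'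
    & cond X (res X s c d) c' d' = cond X s c' d'].
Proof.
move=> hcc hic hmd hic' hmd'.
have hn := not_adj esy hic hic'.
have hn' := not_adj esy hic' hic.
have hdc' : d <> c' by move=> h; apply: hn'; rewrite -h; exact: hmd.1.
rewrite resE; case: ifP => _.
  case: (pres_grow hcc hn) => h1 h2 h3 h4 h5.
  by apply: transfer => //; rewrite h1; exact: hic'.1.
case: (pres_mrg hcc hn hmd.1 hdc' hic'.1) => h1 h2 h3 h4 h5.
exact: transfer.
Qed.

Lemma diamond (V : finType) (e : rel V) (esy : symmetric e) idn (R : realFieldType) (X : R)
   (s a b : config V) :
  step e idn X s a -> step e idn X s b ->
  a = b \/ exists t, step e idn X a t /\ step e idn X b t.
Proof.
move=> /stepE [c [d [hic [hmd ->]]]] /stepE [c' [d' [hic' [hmd' ->]]]].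
case: (c =P c') => [hcc|hcc].
  by left; subst c'; rewrite (max_uniq hmd hmd').
have hcc' : c' <> c by move=> h; apply: hcc.
have hn := not_adj esy hic hic'.
have hn' := not_adj esy hic' hic.
have hdc' : d <> c' by move=> h; apply: hn'; rewrite -h; exact: hmd.1.
have hd'c : d' <> c by move=> h; apply: hn; rewrite -h; exact: hmd'.1.
case: (pres_res esy X hcc' hic hmd hic' hmd') => a1 a2 a3.
case: (pres_res esy X hcc hic' hmd' hic hmd) => b1 b2 b3.
right; exists (res X (res X s c d) c' d'); split.
  by apply/stepE; exists c', d'.
apply/stepE; exists c, d; do 2!split => //.
rewrite [res X (res X s c d) c' d']resE a3 [res X (res X s c' d') c d]resE b3.
rewrite !resE.
case: (cond X s c d); case: (cond X s c' d').
- exact: comm_gg.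
- exact: comm_gm.
- exact: esym (comm_gm _ hcc' hdc').
- exact: comm_mm.
Qed.

Definition inv (V : finType) (s : config V) := forall v, s.1 (s.1 v) = s.1 v.

Lemma inv_step (V : finType) (e : rel V) idn (R : realFieldType) (X : R) (s s' : config V) :
  inv s -> step e idn X s s' -> inv s'.
Proof.
move=> hi /stepE [c [d [hic [hmd ->]]]]; rewrite resE; case: ifP => _ //.
have [_ [hd [hdc _]]] := hmd.1.
move=> v /=; rewrite !ffunE.
case: (s.1 v =P c) => [hv|hv].
  rewrite (eqP hd); case: (d =P c) => // h; by case: hdc.
by rewrite hi (introF eqP hv).
Qed.

Lemma inv_reach (V : finType) (e : rel V) idn (R : realFieldType) (X : R) (s : config V) :
  reachable e idn X s -> inv s.
Proof.
move/clos_rt_rtn1_iff; elim => [|y z hy _ IH].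
  by move=> v /=; rewrite !ffunE.
exact: inv_step IH hy.
Qed.

Lemma leader_all (V : finType) (e : rel V) (s : config V) c :
  (forall x y : V, connect e x y) -> inv s -> leader e s c -> forall v, s.1 v = c.
Proof.
move=> conn hi [hc hl] v.
have : forall p x, s.1 x = c -> path e x p -> s.1 (last x p) = c.
  elim => [|y p IH] x hx //= /andP [hxy hp]; apply: IH hp.
  case: (s.1 y =P c) => // hne; exfalso.
  have hcy : is_cand s (s.1 y) by apply/eqP; exact: hi.
  have ne : c <> s.1 y by move=> h; apply: hne.
  exact: (hl _ (conj hc (conj hcy (conj ne (ex_intro _ x (ex_intro _ y (conj hxy (conj hx erefl)))))))).
move=> H; case/connectP: (conn c v) => p hp ->; apply: H hp.
exact/eqP.
Qed.

Lemma leader_terminal (V : finType) (e : rel V) idn (R : realFieldType) (X : R) (s : config V) c :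
  (forall x y : V, connect e x y) -> inv s -> leader e s c ->
  forall u, ~ step e idn X s u.
Proof.
move=> conn hi hl u /stepE [c' [d [[hc' [[x hx] _]] _]]].
have all := leader_all conn hi hl.
have ec : c' = c by rewrite -(all c'); apply/esym/eqP.
subst c'; exact: (hl.2 x hx).
Qed.

Local Close Scope ring_scope.

Theorem corollary1 (V : finType) (e : rel V) (idn : V -> nat)
  (R : realFieldType) (X : R) :
  (1 < X)%R ->
  symmetric e ->
  (forall x y : V, connect e x y) ->
  injective idn ->
  forall (s1 s2 : config V) (c1 c2 : V),
    reachable e idn X s1 -> leader e s1 c1 ->
    reachable e idn X s2 -> leader e s2 c2 ->
    idn c1 = idn c2.
Proof.
move=> _ esy conn _ s1 s2 c1 c2 r1 l1 r2 l2.
have i1 := inv_reach r1; have i2 := inv_reach r2.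
have [t [h1 h2]] := confl (@diamond _ _ esy idn R X) r1 r2.
have e1 := terminal_rt (@leader_terminal _ _ idn R X _ _ conn i1 l1) h1.
have e2 := terminal_rt (@leader_terminal _ _ idn R X _ _ conn i2 l2) h2.
subst t; subst s2.
have a2 := leader_all conn i1 l2.
have hc1 : s1.1 c1 = c1 by apply/eqP; exact: l1.1.
by rewrite -hc1 a2.
Qed.
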